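(* In an inverse problem, fix data $y_k$ and let $P_{k-1},Q_{k-1}\in\bar{\mathcal{P}}_k(\mathcal{X})\cap\mathcal{P}_1(\mathcal{X})$. Assume $$\frac{\mathbb{E}_{(X,X')\sim P_{k-1}\otimes Q_{k-1}}[d_{\mathcal{X}}(X,X')h(y_k,X)h(y_k,X')]}{\mathbb{E}_{X\sim P_{k-1}}[h(y_k,X)]\,\mathbb{E}_{X\sim Q_{k-1}}[h(y_k,X)]}\le\sup_{x_0\in\mathcal{X}}\Big|\mathbb{E}_{X\sim P_{k-1}}[d_{\mathcal{X}}(X,x_0)]-\mathbb{E}_{X\sim Q_{k-1}}[d_{\mathcal{X}}(X,x_0)]\Big|.$$ Then $P_k=F_k(P_{k-1})$ and $Q_k^*=F_k(Q_{k-1})$ satisfy $W_1(P_k,Q_k^* )\le W_1(P_{k-1},Q_{k-1})$.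
   Context: $(\mathcal{X},d_{\mathcal{X}})$ is a Polish metric space; the likelihood $x\mapsto h(y_k,x)\ge0$ is measurable. For a Borel probability measure $\mu$ on $\mathcal{X}$, $Z_k(\mu)=\int h(y_k,x)\mu(dx)$ and $F_k\mu(dx)=h(y_k,x)\mu(dx)/Z_k(\mu)$. $\bar{\mathcal{P}}_k(\mathcal{X})=\{\mu:0<Z_k(\mu)<\infty\}$; $\mathcal{P}_1(\mathcal{X})$ is the set of probability measures with finite first moment; $W_1$ is the 1-Wasserstein distance w.r.t. $d_{\mathcal{X}}$; $P\otimes Q$ denotes the product measure. *)

(* Defs.v *)
From HB Require Import structures.
From mathcomp Require Import all_boot all_order all_algebra.
From mathcomp Require Import all_classical all_reals all_analysis.
Set Implicit Arguments. Unset Strict Implicit. Unset Printing Implicit Defensive.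
Import Order.TTheory GRing.Theory Num.Theory.
Local Open Scope classical_set_scope.
Local Open Scope ring_scope.

Section Defs.
Context {d : measure_display} {X : measurableType d} {R : realType}.
Variable dist : X -> X -> R.

Definition is_metric : Prop :=
  [/\ forall x y, 0 <= dist x y,
      forall x y, dist x y = 0 <-> x = y,
      forall x y, dist x y = dist y x &
      forall x y z, dist x z <= dist x y + dist y z].

Definition dopen (A : set X) : Prop :=
  forall x, A x -> exists r : R, 0 < r /\ forall y, dist x y < r -> A y.

Definition is_borel_for_dist : Prop :=
  forall A : set X, measurable A <-> <<s dopen >> A.

Definition dseparable : Prop :=
  exists D : set X, countable D /\
    forall x (e : R), 0 < e -> exists y, D y /\ dist x y < e.

Definition dcomplete : Prop :=
  forall u : nat -> X,
    (forall e : R, 0 < e -> exists N, forall m n, (N <= m)%N -> (N <= n)%N ->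
        dist (u m) (u n) < e) ->
    exists l, forall e : R, 0 < e -> exists N, forall n, (N <= n)%N -> dist (u n) l < e.

Definition polish_metric : Prop :=
  [/\ is_metric, is_borel_for_dist, dseparable & dcomplete].

Local Open Scope ereal_scope.

Definition finite_first_moment (mu : probability X R) : Prop :=
  exists x0, \int[mu]_x (dist x x0)%:E < +oo.

(* normalising constant Z_k(mu) for the likelihood g = h(y_k, .) *)
Definition Zk (g : X -> R) (mu : probability X R) : \bar R :=
  \int[mu]_x (g x)%:E.

Definition in_barP (g : X -> R) (mu : probability X R) : Prop :=
  0 < Zk g mu < +oo.

Definition is_Fk (g : X -> R) (mu nu : probability X R) : Prop :=
  forall A, measurable A ->
    nu A = (\int[mu]_(x in A) (g x)%:E) * ((fine (Zk g mu))^-1)%:E.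

Definition is_coupling (P Q : probability X R) (pi : probability (X * X)%type R) : Prop :=
  (forall A, measurable A -> pi (fst @^-1` A) = P A) /\
  (forall A, measurable A -> pi (snd @^-1` A) = Q A).

Definition W1 (P Q : probability X R) : \bar R :=
  ereal_inf [set \int[pi]_z (dist z.1 z.2)%:E
            | pi in [set pi | is_coupling P Q pi]].

End Defs.

(* Main.v *)
Require Import Defs.
From HB Require Import structures.
From mathcomp Require Import all_boot all_order all_algebra.
From mathcomp Require Import all_classical all_reals all_analysis.
From mathcomp Require Import measurable_realfun lebesgue_measure lebesgue_integral probability.
From mathcomp Require Import ring lra.
Import Order.TTheory GRing.Theory Num.Theory.
Local Open Scope classical_set_scope.
Local Open Scope ring_scope.

Section dens.
Local Open Scope ereal_scope.
Context d (T : measurableType d) (R : realType).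
Variables (mu nu : {measure set T -> \bar R}) (G : T -> R).
Hypothesis G0 : forall x, (0 <= G x)%R.
Hypothesis mG : measurable_fun setT G.
Hypothesis Hnu : forall A, measurable A -> nu A = \int[mu]_(x in A) (G x)%:E.
Import HBNNSimple.

Lemma dens_integral (f : T -> \bar R) : (forall x, 0 <= f x) ->
  measurable_fun setT f ->
  \int[nu]_x f x = \int[mu]_x (f x * (G x)%:E).
Proof.
move=> f0 mf; set E := [set: T]; have mE : measurable E by exact: measurableT.
set g := fun x => (G x)%:E.
have mg : measurable_fun E g by exact/measurable_EFinP.
pose h := nnsfun_approx mE mf.
have -> : \int[nu]_(x in E) f x =
    lim (\int[nu]_(x in E) (EFin \o h n) x @[n --> \oo]).
  have fE x : E x -> f x = lim ((EFin \o h n) x @[n --> \oo]).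
    by move=> Ex; apply/esym/cvg_lim => //; exact: cvg_nnsfun_approx.
  under eq_integral => x /[!inE] /fE -> //.
  apply: monotone_convergence => //.
  - move=> n; apply/measurable_EFinP.
    by apply: (measurable_funS measurableT) => //; exact/measurable_funP.
  - by move=> n x Ex //=; rewrite lee_fin.
  - by move=> x Ex a b ab; rewrite lee_fin; exact/lefP/nd_nnsfun_approx.
have -> : \int[mu]_(x in E) (f x * g x) =
    lim (\int[mu]_(x in E) ((EFin \o h n) \* g) x @[n --> \oo]).
  have fg x : E x -> f x * g x = lim (((EFin \o h n) \* g) x @[n --> \oo]).
    by move=> Ex; apply/esym/cvg_lim => //; apply: cvgeZr;
      [by []|exact: cvg_nnsfun_approx].
  under eq_integral => x /[!inE] /fg -> //.
  apply: monotone_convergence => [//| | |].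
  - move=> n; apply: emeasurable_funM => //.
    by apply/measurable_EFinP; exact: measurable_funP.
  - by move=> n x Ex /=; rewrite mule_ge0 ?lee_fin.
  - by move=> x Ex a b ab/=; rewrite lee_wpmul2r ?lee_fin//; exact/lefP/nd_nnsfun_approx.
suff suf n : \int[mu]_(x in E) ((EFin \o h n) x * g x) =
    \int[nu]_(x in E) (EFin \o h n) x.
  suff -> : (fun n => \int[nu]_(x in E) (EFin \o h n) x) = (fun n => \int[mu]_(x in E) ((EFin \o h n) x * g x)) by []. by apply: funext => n; rewrite suf.
transitivity (\int[nu]_(x in E)
   (\sum_(y \in range (h n)) (y * \1_(h n @^-1` [set y]) x)%:E)); last first.
  by apply: eq_integral => t tE; rewrite /= fimfunE -fsumEFin.
have indich m r : measurable_fun E (fun x => (r * \1_(h m @^-1` [set r]) x)%:E).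
  by apply: (measurable_comp measurableT) => //; exact: measurable_funM.
rewrite ge0_integral_fsum//; last by move=> m y Ey; rewrite EFinM; exact: nnfun_muleindic_ge0.
transitivity (\int[mu]_(x in E) (\sum_(y \in range (h n))
    (y * \1_(h n @^-1` [set y]) x)%:E * g x)).
  under [RHS]eq_integral => x xE.
    rewrite -ge0_mule_fsuml => [|y]; last by rewrite EFinM; exact: nnfun_muleindic_ge0.
    rewrite fsumEFin // -(fimfunE _ x); over.
  by [].
rewrite ge0_integral_fsum//; last 2 first.
  - move=> y; apply: emeasurable_funM => //.
  - by move=> m y Ey; apply: mule_ge0; [rewrite EFinM; exact: nnfun_muleindic_ge0 | rewrite lee_fin].
apply: eq_fsbigr => r rhn.
under [RHS]eq_integral do rewrite EFinM.
rewrite integralZl_indic_nnsfun => //.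
under eq_integral do rewrite EFinM -muleA.
rewrite ge0_integralZl//.
- under eq_integral do rewrite muleC.
  rewrite (eq_integral (g \_ (h n @^-1` [set r]))); last first.
    by move=> x xE; rewrite epatch_indic.
  by rewrite -integral_mkcondr -Hnu// integral_indic// setIC.
- apply: emeasurable_funM => //; exact/measurable_EFinP.
- by move=> t Et; rewrite mule_ge0 ?lee_fin.
- by move: rhn; rewrite inE => -[t _ <-]; rewrite lee_fin.
Qed.
End dens.
Arguments dens_integral {d T R mu nu G} G0 mG Hnu f.

Section marg.
Local Open Scope ereal_scope.
Context d (X : measurableType d) (R : realType).

Lemma marg1 (pi : probability (X * X)%type R) (P : probability X R) (f : X -> \bar R) :
  (forall A, measurable A -> pi (fst @^-1` A) = P A) ->
  (forall x, 0 <= f x) -> measurable_fun setT f ->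
  \int[pi]_z f z.1 = \int[P]_x f x.
Proof.
move=> H f0 mf.
have -> : \int[P]_x f x = \int[pushforward pi fst]_x f x.
  apply: (eq_measure_integral (pushforward pi fst)) => A mA _.
  by rewrite /pushforward /=; symmetry; exact: H.
rewrite ge0_integral_pushforward//; try exact: measurable_fst; try exact: measurable_snd; rewrite ?preimage_setT.

Qed.

Lemma marg2 (pi : probability (X * X)%type R) (P : probability X R) (f : X -> \bar R) :
  (forall A, measurable A -> pi (snd @^-1` A) = P A) ->
  (forall x, 0 <= f x) -> measurable_fun setT f ->
  \int[pi]_z f z.2 = \int[P]_x f x.
Proof.
move=> H f0 mf.
have -> : \int[P]_x f x = \int[pushforward pi snd]_x f x.
  apply: (eq_measure_integral (pushforward pi snd)) => A mA _.
  by rewrite /pushforward /=; symmetry; exact: H.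
rewrite ge0_integral_pushforward//; try exact: measurable_fst; try exact: measurable_snd; rewrite ?preimage_setT.

Qed.

Lemma aux_abs (a b c : \bar R) : a \is a fin_num -> b \is a fin_num ->
  a <= c + b -> b <= c + a -> `|a - b| <= c.
Proof.
move: a b => [a| |] [b| |] //= _ _; case: c => [c| | ] //=; rewrite ?leey //.
rewrite !lee_fin => h1 h2.
rewrite ler_norml; apply/andP; split; lra.
Qed.

End marg.
Arguments marg1 {d X R pi P f}.
Arguments marg2 {d X R pi P f}.

Section bound.
Local Open Scope ereal_scope.
Context d (X : measurableType d) (R : realType) (dist : X -> X -> R).
Hypothesis d0 : forall x y, (0 <= dist x y)%R.
Hypothesis dsym : forall x y, dist x y = dist y x.
Hypothesis dtri : forall x y z, (dist x z <= dist x y + dist y z)%R.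
Hypothesis md : measurable_fun setT (fun z : X * X => dist z.1 z.2).

Lemma mdx y : measurable_fun setT (fun x => dist x y).
Proof. exact: (measurable_fun_pair1 (f:=fun z : X * X => dist z.1 z.2) y md). Qed.

Lemma moment_fin (P : probability X R) x0 :
  finite_first_moment dist P -> \int[P]_x (dist x x0)%:E < +oo.
Proof.
move=> [x1 Hx1].
have HH : \int[P]_x (dist x x0)%:E <= \int[P]_x ((dist x x1)%:E + (dist x1 x0)%:E).
  apply: ge0_le_integral => //.
  - by move=> x _; rewrite lee_fin.
  - by apply/measurable_EFinP; exact: mdx.
  - by apply: emeasurable_funD; apply/measurable_EFinP; [exact: mdx | exact: measurable_cst].
  - by move=> x _; rewrite -EFinD lee_fin.
apply: (le_lt_trans HH).
rewrite ge0_integralD//; last 3 first.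
  - by move=> x _; rewrite lee_fin.
  - by apply/measurable_EFinP; exact: mdx.
  - by move=> x _; rewrite lee_fin.
apply: lte_add_pinfty => //; rewrite integral_cst// ltey_eq fin_numM// fin_num_measure//.
Qed.

Lemma coupling_bound (P Q : probability X R) (pi : probability (X * X)%type R) x0 :
  finite_first_moment dist P -> finite_first_moment dist Q -> is_coupling P Q pi ->
  `| \int[P]_x (dist x x0)%:E - \int[Q]_x (dist x x0)%:E | <= \int[pi]_z (dist z.1 z.2)%:E.
Proof.
move=> fP fQ [H1 H2].
have aP := moment_fin P x0 fP; have bQ := moment_fin Q x0 fQ.
have mD : measurable_fun setT (fun z : X * X => (dist z.1 z.2)%:E) by exact/measurable_EFinP.
have ma : measurable_fun setT (fun z : X * X => (dist z.1 x0)%:E).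
  by apply/measurable_EFinP; exact: (measurableT_comp (mdx x0) measurable_fst).
have mb : measurable_fun setT (fun z : X * X => (dist z.2 x0)%:E).
  by apply/measurable_EFinP; exact: (measurableT_comp (mdx x0) measurable_snd).
have ge0 : forall x, 0 <= (dist x x0)%:E by move=> x; rewrite lee_fin.
have mx : measurable_fun setT (fun x => (dist x x0)%:E) by by apply/measurable_EFinP; exact: mdx.
rewrite -(marg1 H1 ge0 mx) -(marg2 H2 ge0 mx).
rewrite -(marg1 H1 ge0 mx) in aP; rewrite -(marg2 H2 ge0 mx) in bQ.
apply: aux_abs.
- by rewrite ge0_fin_numE// integral_ge0.
- by rewrite ge0_fin_numE// integral_ge0.
- rewrite -ge0_integralD//; try by move=> z _; rewrite lee_fin.
  apply: ge0_le_integral => //.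
  - by apply: emeasurable_funD.
  - by move=> z _; rewrite -EFinD lee_fin; exact: dtri.
- rewrite -ge0_integralD//; try by move=> z _; rewrite lee_fin.
  apply: ge0_le_integral => //.
  - by apply: emeasurable_funD.
  - by move=> z _; rewrite -EFinD lee_fin (dsym z.1 z.2); exact: dtri.
Qed.

End bound.
Arguments coupling_bound {d X R dist} d0 dsym dtri md {P Q pi} x0.

Local Open Scope ereal_scope.

Lemma theorem5_aux (R : realType) (d : measure_display) (X : measurableType d)
  (dist : X -> X -> R) (Y : Type) (h : Y -> X -> R) (yk : Y)
  (Pkm1 Qkm1 Pk Qk : probability X R) :
  polish_metric dist ->
  measurable_fun setT (fun z : X * X => dist z.1 z.2) ->
  (forall y x, 0 <= h y x)%R ->
  measurable_fun setT (h yk) ->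
  in_barP (h yk) Pkm1 -> finite_first_moment dist Pkm1 ->
  in_barP (h yk) Qkm1 -> finite_first_moment dist Qkm1 ->
  (\int[(Pkm1 \x Qkm1)%E]_z (dist z.1 z.2 * h yk z.1 * h yk z.2)%:E
     * ((fine (Zk (h yk) Pkm1 * Zk (h yk) Qkm1))^-1)%:E
   <= ereal_sup [set `| \int[Pkm1]_x (dist x x0)%:E - \int[Qkm1]_x (dist x x0)%:E |
                | x0 in [set: X]])%E ->
  is_Fk (h yk) Pkm1 Pk ->
  is_Fk (h yk) Qkm1 Qk ->
  (W1 dist Pk Qk <= W1 dist Pkm1 Qkm1)%E.
Proof.
move=> [[d0 deq dsym dtri] _ _ _] md h0 mh /andP[ZP0 ZPoo] fP /andP[ZQ0 ZQoo] fQ Hyp FP FQ.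
set g := h yk in mh Hyp FP FQ ZP0 ZPoo ZQ0 ZQoo.
have fZP : Zk g Pkm1 \is a fin_num by rewrite ge0_fin_numE// ltW.
have fZQ : Zk g Qkm1 \is a fin_num by rewrite ge0_fin_numE// ltW.
have cP0 : (0 < fine (Zk g Pkm1))%R by apply: fine_gt0; rewrite ZP0 ZPoo.
have cQ0 : (0 < fine (Zk g Qkm1))%R by apply: fine_gt0; rewrite ZQ0 ZQoo.
set cP := ((fine (Zk g Pkm1))^-1)%R in FP.
set cQ := ((fine (Zk g Qkm1))^-1)%R in FQ.
have cPge0 : (0 <= cP)%R by rewrite invr_ge0 ltW.
have cQge0 : (0 <= cQ)%R by rewrite invr_ge0 ltW.
have mD : measurable_fun setT (fun z : X * X => (dist z.1 z.2)%:E) by exact/measurable_EFinP.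
have D0 : forall z : X * X, 0 <= (dist z.1 z.2)%:E by move=> z; rewrite lee_fin.
have HP : forall A, measurable A -> Pk A = \int[Pkm1]_(x in A) (g x * cP)%:E.
  move=> A mA; rewrite FP// -ge0_integralZr//.
  - exact/measurable_funTS/measurable_EFinP.
  - by move=> x _; rewrite lee_fin; exact: h0.
have HQ : forall A, measurable A -> Qk A = \int[Qkm1]_(x in A) (g x * cQ)%:E.
  move=> A mA; rewrite FQ// -ge0_integralZr//.
  - exact/measurable_funTS/measurable_EFinP.
  - by move=> x _; rewrite lee_fin; exact: h0.
have GP0 : forall x, (0 <= g x * cP)%R by move=> x; apply: mulr_ge0 => //; exact: h0.
have GQ0 : forall x, (0 <= g x * cQ)%R by move=> x; apply: mulr_ge0 => //; exact: h0.
have mGP : measurable_fun setT (fun x => g x * cP)%R by apply: measurable_funM.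
have mGQ : measurable_fun setT (fun x => g x * cQ)%R by apply: measurable_funM.
have densP := dens_integral (mu:=Pkm1) (nu:=Pk) (G:=fun x => g x * cP)%R GP0 mGP HP.
have densQ := dens_integral (mu:=Qkm1) (nu:=Qk) (G:=fun x => g x * cQ)%R GQ0 mGQ HQ.
have L1 : W1 dist Pk Qk <= \int[(Pk \x Qk)%E]_z (dist z.1 z.2)%:E.
  apply: ereal_inf_lbound; exists (Pk \x Qk)%E => //.
  split => A mA.
  - rewrite (_ : fst @^-1` A = A `*` setT); last first.
      by apply/seteqP; split => -[x y] /=; rewrite /setT /=; tauto.
    apply: (eq_trans (product_measure1E Pk Qk mA (@measurableT _ X))).
    rewrite -[RHS]mule1; congr (_ * _); exact: probability_setT.
  - rewrite (_ : snd @^-1` A = setT `*` A); last first.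
      by apply/seteqP; split => -[x y] /=; rewrite /setT /=; tauto.
    apply: (eq_trans (product_measure1E Pk Qk (@measurableT _ X) mA)).
    rewrite -[RHS]mul1e; congr (_ * _); exact: probability_setT.
have L3 : ereal_sup [set `| \int[Pkm1]_x (dist x x0)%:E - \int[Qkm1]_x (dist x x0)%:E |
                | x0 in [set: X]] <= W1 dist Pkm1 Qkm1.
  apply: ge_ereal_sup => _ [x0 _ <-]; apply: le_ereal_inf_tmp => _ [pi Hpi <-].
  exact: (coupling_bound d0 dsym dtri md x0 fP fQ Hpi).
apply: (le_trans L1); apply: (le_trans _ L3); apply: (le_trans _ Hyp).
rewrite le_eqVlt; apply/orP; left; apply/eqP.
have -> : ((fine (Zk g Pkm1 * Zk g Qkm1))^-1)%R = (cP * cQ)%R by rewrite fineM// invfM.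
have mF : measurable_fun setT (fun z : X * X => (dist z.1 z.2 * g z.1 * g z.2)%:E).
  apply/measurable_EFinP; apply: measurable_funM; [apply: measurable_funM|].
  - exact: md.
  - exact: (measurableT_comp mh measurable_fst).
  - exact: (measurableT_comp mh measurable_snd).
have F0 : forall z : X * X, 0 <= (dist z.1 z.2 * g z.1 * g z.2)%:E.
  by move=> z; rewrite lee_fin; apply: mulr_ge0; [apply: mulr_ge0|]; [exact: d0 | exact: h0 | exact: h0].
rewrite (fubini_tonelli1 _ mD D0) (fubini_tonelli1 _ mF F0).
rewrite densP; last 2 first.
- by move=> x; apply: integral_ge0 => y _; exact: D0.
- exact: (measurable_fun_fubini_tonelli_F _ mD D0).
have FF0 : forall x, 0 <= fubini_F Qkm1 (fun z : X * X => (dist z.1 z.2 * g z.1 * g z.2)%:E) x.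
  by move=> x; apply: integral_ge0 => y _; exact: F0.
have mFF := measurable_fun_fubini_tonelli_F _ mF F0.
rewrite -ge0_integralZr//; try exact: mFF; try (by move=> x _; exact: FF0); try by rewrite lee_fin mulr_ge0.
apply: eq_integral => x _; rewrite /fubini_F /=.
rewrite (densQ (fun y => (dist x y)%:E)); last 2 first.
- by move=> y; rewrite lee_fin.
- by apply/measurable_EFinP; exact: (measurable_fun_pair2 (f:=fun z : X * X => dist z.1 z.2) x md).
rewrite -!ge0_integralZr//.
- by apply: eq_integral => y _; rewrite -!EFinM; congr EFin; ring.
- exact: (measurable_fun_pair2 (f:=fun z : X * X => (dist z.1 z.2 * g z.1 * g z.2)%:E) x mF).
- by move=> y _; exact: (F0 (x, y)).
- by rewrite lee_fin mulr_ge0.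
- apply: emeasurable_funM; last exact/measurable_EFinP.
  by apply/measurable_EFinP; exact: (measurable_fun_pair2 (f:=fun z : X * X => dist z.1 z.2) x md).
- by move=> y _; rewrite mule_ge0// lee_fin.
- by rewrite lee_fin.
Qed.

Local Close Scope ereal_scope.

Theorem theorem5 (R : realType) (d : measure_display) (X : measurableType d)
  (dist : X -> X -> R) (Y : Type) (h : Y -> X -> R) (yk : Y)
  (Pkm1 Qkm1 Pk Qk : probability X R) :
  polish_metric dist ->
  measurable_fun setT (fun z : X * X => dist z.1 z.2) ->
  (forall y x, 0 <= h y x) ->
  measurable_fun setT (h yk) ->
  in_barP (h yk) Pkm1 -> finite_first_moment dist Pkm1 ->
  in_barP (h yk) Qkm1 -> finite_first_moment dist Qkm1 ->
  (\int[(Pkm1 \x Qkm1)%E]_z (dist z.1 z.2 * h yk z.1 * h yk z.2)%:E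
     * ((fine (Zk (h yk) Pkm1 * Zk (h yk) Qkm1))^-1)%:E
   <= ereal_sup [set `| \int[Pkm1]_x (dist x x0)%:E - \int[Qkm1]_x (dist x x0)%:E |
                | x0 in [set: X]])%E ->
  is_Fk (h yk) Pkm1 Pk ->
  is_Fk (h yk) Qkm1 Qk ->
  (W1 dist Pk Qk <= W1 dist Pkm1 Qkm1)%E.
Proof. exact: theorem5_aux. Qed.
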